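(* Let $Q$ be a quiver without oriented cycles and $\mathbf{1}$ the dimension vector with $\mathbf{1}(x)=1$ for all $x\in Q_0$. For every $W\in\operatorname{Rep}(Q,\mathbf{1})$, the orbit semigroup $S(W)$ is saturated.
   Context: Work over an algebraically closed field $k$ of characteristic zero. $\operatorname{Rep}(Q,\mathbf{1})=k^{Q_1}$ with the torus $\operatorname{GL}(\mathbf{1})=(k^* )^{Q_0}$ acting by $(g\cdot W)(a)=g(ha)W(a)g(ta)^{-1}$. For $\sigma\in\mathbb{Z}^{Q_0}$, $\operatorname{SI}(Q,\mathbf{1})_\sigma$ is the space of polynomial functions $f$ with $g\cdot f=\sigma(g)f$, $\sigma(g)=\prod_xg(x)^{\sigma(x)}$, and $S(W)=\{\sigma\in\mathbb{Z}^{Q_0}\mid\exists f\in\operatorname{SI}(Q,\mathbf{1})_\sigma,\ f(W)\ne0\}$. Saturated means $n\sigma\in S(W)$ for some integer $n\ge1$ implies $\sigma\in S(W)$. *)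

(* Defs.v *)
From HB Require Import structures.
From mathcomp Require Import all_boot all_order all_algebra.
Set Implicit Arguments. Unset Strict Implicit. Unset Printing Implicit Defensive.
Import Order.TTheory GRing.Theory Num.Theory.
Local Open Scope ring_scope.

(* A finite quiver: vertices Q0, arrows Q1, head map hd and tail map tl
   (arrow a goes from tl a to hd a). *)

Definition arrow_next (Q0 Q1 : finType) (hd tl : Q1 -> Q0) : rel Q1 :=
  fun a b => hd a == tl b.

Definition oriented_cycle (Q0 Q1 : finType) (hd tl : Q1 -> Q0)
    (a : Q1) (p : seq Q1) : bool :=
  path (arrow_next hd tl) a p && (hd (last a p) == tl a).

Definition no_oriented_cycles (Q0 Q1 : finType) (hd tl : Q1 -> Q0) : Prop :=
  forall (a : Q1) (p : seq Q1), ~~ oriented_cycle hd tl a p.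

(* Rep(Q,1) = k^{Q1}; torus GL(1) = product of copies of k^* indexed by Q0, an element given by g : Q0 -> k
   with all g x nonzero. *)
Definition torus_elt (k : fieldType) (Q0 : finType) (g : Q0 -> k) : Prop :=
  forall x, g x != 0.

Definition rep_act (k : fieldType) (Q0 Q1 : finType) (hd tl : Q1 -> Q0)
    (g : Q0 -> k) (W : Q1 -> k) : Q1 -> k :=
  fun a => g (hd a) * W a * (g (tl a))^-1.

Definition torus_inv (k : fieldType) (Q0 : finType) (g : Q0 -> k) : Q0 -> k :=
  fun x => (g x)^-1.

Definition char_eval (k : fieldType) (Q0 : finType) (sigma : Q0 -> int)
    (g : Q0 -> k) : k :=
  \prod_(x : Q0) (g x) ^ (sigma x).

Definition is_polyfun (k : fieldType) (Q1 : finType) (f : (Q1 -> k) -> k) : Prop :=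
  exists s : seq (k * {ffun Q1 -> nat}),
    forall W : Q1 -> k, f W = \sum_(m <- s) m.1 * \prod_(a : Q1) (W a) ^+ (m.2 a).

(* f in SI(Q,1)_sigma : polynomial with g.f = sigma(g) f,
   where (g.f)(W) = f(g^-1 . W). *)
Definition semi_inv (k : fieldType) (Q0 Q1 : finType) (hd tl : Q1 -> Q0)
    (sigma : Q0 -> int) (f : (Q1 -> k) -> k) : Prop :=
  is_polyfun f /\
  forall g : Q0 -> k, torus_elt g ->
    forall W : Q1 -> k, f (rep_act hd tl (torus_inv g) W) = char_eval sigma g * f W.

Definition orbit_semigroup (k : fieldType) (Q0 Q1 : finType) (hd tl : Q1 -> Q0)
    (W : Q1 -> k) (sigma : Q0 -> int) : Prop :=
  exists f : (Q1 -> k) -> k, semi_inv hd tl sigma f /\ f W != 0.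

Definition saturated (Q0 : finType) (S : (Q0 -> int) -> Prop) : Prop :=
  forall (sigma : Q0 -> int) (n : nat), (1 <= n)%N ->
    S (fun x => n%:Z * sigma x) -> S sigma.

(* Main.v *)
Require Import Defs.
From HB Require Import structures.
From mathcomp Require Import all_boot all_order all_algebra.
Import Order.TTheory GRing.Theory Num.Theory.
Local Open Scope ring_scope.
Set Implicit Arguments. Unset Strict Implicit.

Lemma exists_ker (I J : finType) (A : {set I}) (B : {set J}) (M : J -> I -> rat) :
  (#|B| < #|A|)%N ->
  exists c : I -> rat, (forall i, i \notin A -> c i = 0) /\ (exists i, c i != 0) /\
    forall j, j \in B -> \sum_(i in A) M j i * c i = 0.
Proof.
move=> ltBA.
pose X : 'M[rat]_(#|A|, #|B|) := \matrix_(r, s) M (enum_val s) (enum_val r).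
have : kermx X != 0.
  rewrite kermx_eq0 /row_free; apply/negP => /eqP E.
  by move: (rank_leq_col X); rewrite E leqNgt ltBA.
case/matrix0Pn => r0 [r1 Hr].
pose c i := \sum_(r < #|A| | enum_val r == i) kermx X r0 r.
have cE r : c (enum_val r) = kermx X r0 r.
  rewrite /c (big_pred1 r) // => r'; apply/eqP/eqP => [/enum_val_inj|->] //.
exists c; split; [|split].
- move=> i iA; rewrite /c big_pred0 // => r; apply/negP => /eqP E.
  by move: iA; rewrite -E enum_valP.
- by exists (enum_val r1); rewrite cE.
move=> j jB.
rewrite big_enum_val /=.
have KX (s : 'I_#|B|) : \sum_r kermx X r0 r * X r s = 0.
  by have := congr1 (fun Z : 'M[rat]_(#|A|, #|B|) => Z r0 s) (mulmx_ker X); rewrite !mxE.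
rewrite -[RHS](KX (enum_rank_in jB j)); apply: eq_bigr => r _.
rewrite [X _ _]mxE (enum_rankK_in _ jB) // mulrC; congr (_ * _).
rewrite /c (big_pred1 r) // => r'; apply/eqP/eqP => [/enum_val_inj|->] //.
Qed.

Definition wtR (R : pzRingType) (Q0 Q1 : finType) (hd tl : Q1 -> Q0)
  (c : Q1 -> R) (x : Q0) : R :=
  \sum_a ((tl a == x)%:R - (hd a == x)%:R) * c a.

Lemma wtR_sum0 (R : pzRingType) (Q0 Q1 : finType) (hd tl : Q1 -> Q0) (c : Q1 -> R) :
  \sum_x wtR hd tl c x = 0.
Proof.
rewrite /wtR exchange_big /= big1 // => a _.
rewrite -mulr_suml sumrB.
have E (z : Q0) : \sum_x ((z == x)%:R : R) = 1.
  by rewrite (bigD1 z) //= eqxx big1 ?addr0 // => x /negbTE; rewrite eq_sym => ->.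
by rewrite !E subrr mul0r.
Qed.

Lemma wtR_shift (R : comPzRingType) (Q0 Q1 : finType) (hd tl : Q1 -> Q0)
  (y c : Q1 -> R) (t : R) x :
  wtR hd tl (fun a => y a + t * c a) x = wtR hd tl y x + t * wtR hd tl c x.
Proof.
by rewrite /wtR mulr_sumr -big_split /=; apply: eq_bigr => a _; rewrite mulrDr mulrCA.
Qed.

Lemma wtR_in (R : pzRingType) (Q0 Q1 : finType) (hd tl : Q1 -> Q0)
  (F : {set Q1}) (c : Q1 -> R) x : (forall a, a \notin F -> c a = 0) ->
  wtR hd tl c x = \sum_(a in F) ((tl a == x)%:R - (hd a == x)%:R) * c a.
Proof.
move=> H; rewrite /wtR (bigID (fun a => a \in F)) /= [X in _ + X]big1 ?addr0 //.
by move=> a /H ->; rewrite mulr0.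
Qed.

Lemma sum_sel (R : pzRingType) (T : finType) (F : {set T}) (P : pred T) (y : T -> R) :
  \sum_(a in F) (P a)%:R * y a = \sum_(a in [set b in F | P b]) y a.
Proof.
rewrite [RHS]big_mkcond [LHS]big_mkcond; apply: eq_bigr => a _; rewrite inE.
by case: (a \in F); case: (P a); rewrite /= ?mul1r ?mul0r.
Qed.

Lemma round_base (Q0 Q1 : finType) (hd tl : Q1 -> Q0) (S : pred Q1)
  (sigma : Q0 -> int) (y : Q1 -> rat) :
  (forall a, y a \is a Num.int) -> (forall a, 0 <= y a) -> (forall a, y a != 0 -> S a) ->
  (forall x, wtR hd tl y x = (sigma x)%:~R) ->
  exists m : Q1 -> nat, (forall a, m a != 0%N -> S a) /\
    forall x, wtR hd tl (fun a => (m a)%:R : int) x = sigma x.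
Proof.
move=> Hi H0 HS Hw.
have E a : y a = (`|Num.floor (y a)|%N)%:R.
  by rewrite pmulrn gez0_abs ?floor_ge0 // floorK.
exists (fun a => `|Num.floor (y a)|%N); split.
  by move=> a Ha; apply: HS; rewrite E pnatr_eq0.
move=> x; apply: (@intr_inj rat); rewrite -Hw /wtR rmorph_sum; apply: eq_bigr => a _.
by rewrite rmorphM rmorphB /= !rmorph_nat -E.
Qed.

Lemma round_flow (Q0 Q1 : finType) (hd tl : Q1 -> Q0) (S : pred Q1)
  (sigma : Q0 -> int) N : forall y : Q1 -> rat,
  (#|[set a | y a \isn't a Num.int]| <= N)%N ->
  (forall a, 0 <= y a) -> (forall a, y a != 0 -> S a) ->
  (forall x, wtR hd tl y x = (sigma x)%:~R) ->
  exists m : Q1 -> nat, (forall a, m a != 0%N -> S a) /\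
    forall x, wtR hd tl (fun a => (m a)%:R : int) x = sigma x.
Proof.
elim: N => [|N IH] y HN H0 HS Hw.
  apply: round_base => // a; move: HN; rewrite leqn0 => /eqP/cards0_eq/setP/(_ a).
  by rewrite !inE => /negbFE.
set F := [set a | y a \isn't a Num.int] in HN.
have [F0|[a1 a1F]] := set_0Vmem F.
  by apply: round_base => // a; move/setP: F0 => /(_ a); rewrite !inE => /negbFE.
pose Tx x := [set a in F | tl a == x].
pose Hx x := [set a in F | hd a == x].
have Fsplit x : \sum_(a in F) ((tl a == x)%:R - (hd a == x)%:R) * y a
    = \sum_(a in Tx x) y a - \sum_(a in Hx x) y a.
  rewrite (eq_bigr (fun a => (tl a == x)%:R * y a - (hd a == x)%:R * y a)).
    by rewrite sumrB !sum_sel.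
  by move=> a _; rewrite mulrBl.
have intpart x : \sum_(a | a \notin F) ((tl a == x)%:R - (hd a == x)%:R) * y a
    \is a Num.int.
  apply: rpred_sum => a aF; apply: rpredM; first by apply: rpredB; apply: natr_int.
  by move: aF; rewrite inE negbK.
have deg2 x : (0 < #|Tx x| + #|Hx x|)%N -> (2 <= #|Tx x| + #|Hx x|)%N.
  move=> Hpos; rewrite leqNgt; apply/negP => Hlt.
  have Hw' := Hw x; rewrite /wtR (bigID (fun a => a \in F)) /= Fsplit in Hw'.
  have Zint : \sum_(a in Tx x) y a - \sum_(a in Hx x) y a \is a Num.int.
    rewrite -[X in X \is a _](addrK (\sum_(a | a \notin F)
       ((tl a == x)%:R - (hd a == x)%:R) * y a)) Hw'.
    by apply: rpredB; [apply: intr_int | apply: intpart].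
  have key a0 : a0 \in F -> y a0 \is a Num.int -> False.
    by rewrite inE => /negP.
  move: Hpos Hlt; case eT: #|Tx x| => [|[|?]]; case eH : #|Hx x| => [|[|?]] //= _ _.
  - have /cards1P [a0 Ha0] : #|Hx x| == 1%N by rewrite eH.
    have a0F : a0 \in F by have := set11 a0; rewrite -Ha0 inE => /andP[].
    apply: (key a0 a0F); move: Zint.
    by rewrite Ha0 (cards0_eq eT) big_set0 big_set1 sub0r rpredN.
  - have /cards1P [a0 Ha0] : #|Tx x| == 1%N by rewrite eT.
    have a0F : a0 \in F by have := set11 a0; rewrite -Ha0 inE => /andP[].
    apply: (key a0 a0F); move: Zint.
    by rewrite Ha0 (cards0_eq eH) big_set0 big_set1 subr0.
have card_sum (P : Q1 -> Q0) :
    (\sum_x #|[set a in F | P a == x]| = #|F|)%N.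
  rewrite -sum1_card (partition_big P predT) //; apply: eq_bigr => x _.
  by rewrite -sum1_card; apply: eq_bigl => a; rewrite inE.
pose V := [set x | (0 < #|Tx x| + #|Hx x|)%N].
have VF : (#|V| <= #|F|)%N.
  rewrite -(leq_pmul2r (isT : (0 < 2)%N)) -sum_nat_const.
  apply: (@leq_trans (\sum_x (#|Tx x| + #|Hx x|))%N).
    rewrite [X in (_ <= X)%N](bigID (fun x => x \in V)) /=.
    apply: leq_trans (leq_addr _ _); apply: leq_sum => x xV.
    by apply: deg2; move: xV; rewrite inE.
  by rewrite big_split /= !card_sum muln2 addnn.
have x0V : tl a1 \in V.
  rewrite inE; apply: leq_trans (leq_addr _ _); rewrite card_gt0.
  by apply/set0Pn; exists a1; rewrite inE a1F eqxx.
have BF : (#|V :\ tl a1| < #|F|)%N.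
  by move: VF; rewrite (cardsD1 (tl a1) V) x0V.
have [c [c0 [[a2 Ha2] Hc]]] := exists_ker
  (fun x a => (tl a == x)%:R - (hd a == x)%:R) BF.
have cF a : c a != 0 -> a \in F.
  by move=> ca; apply/negPn/negP => /c0 e; rewrite e eqxx in ca.
have wV x : x != tl a1 -> wtR hd tl c x = 0.
  move=> nx; rewrite (@wtR_in _ _ _ hd tl F c x c0).
  case xV: (x \in V); first by rewrite Hc // in_setD1 nx xV.
  move: xV; rewrite inE lt0n => /negbFE; rewrite addn_eq0.
  case/andP => /eqP/cards0_eq T0 /eqP/cards0_eq H0x.
  apply: big1 => a aF; have aF' := aF; rewrite inE in aF'.
  have : a \notin Tx x by rewrite T0 inE.
  have : a \notin Hx x by rewrite H0x inE.
  by rewrite !inE aF' /= => /negbTE -> /negbTE ->; rewrite subrr mul0r.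
have wc x : wtR hd tl c x = 0.
  case: (eqVneq x (tl a1)) => [->|/wV //].
  have := wtR_sum0 hd tl c; rewrite (bigD1 (tl a1)) //= big1 ?addr0 //.
pose d a := if 0 < c a then ((Num.floor (y a) + 1)%:~R - y a) / c a
            else (y a - (Num.floor (y a))%:~R) / (- c a).
have dpos a : c a != 0 -> 0 <= d a.
  move=> ca; rewrite /d; case: ifP => cpos.
    by apply: divr_ge0; [rewrite subr_ge0 ltW // floorD1_gt | exact: ltW].
  by apply: divr_ge0; [rewrite subr_ge0 floor_le | rewrite oppr_ge0 leNgt cpos].
have [a0 Pa0 Hmin] := @arg_minP _ _ _ a2 (fun a => c a != 0) d Ha2.
pose t := d a0.
pose y' a := y a + t * c a.
have tpos : 0 <= t := dpos a0 Pa0.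
have y'0 a : c a = 0 -> y' a = y a by move=> e; rewrite /y' e mulr0 addr0.
have y'ge a : 0 <= y' a.
  case: (eqVneq (c a) 0) => [e|ca]; first by rewrite y'0.
  rewrite /y'; case cpos: (0 < c a).
    by apply: addr_ge0 => //; apply: mulr_ge0 => //; exact: ltW.
  have cneg : c a <= 0 by rewrite leNgt cpos.
  have E : y a + d a * c a = (Num.floor (y a))%:~R.
    by rewrite /d cpos invrN mulrN mulNr -mulrA mulVf // mulr1 opprB addrC subrK.
  apply: (@le_trans _ _ (y a + d a * c a)); last first.
    by rewrite lerD2l; apply: ler_wnM2r => //; apply: Hmin.
  by rewrite E ler0z floor_ge0.
have y'int : y' a0 \is a Num.int.
  rewrite /y' /t /d; case: ifP => cpos.
    by rewrite -mulrA mulVf // mulr1 addrC subrK; exact: intr_int.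
  by rewrite invrN mulrN mulNr -mulrA mulVf // mulr1 opprB addrC subrK; exact: intr_int.
have F'sub : [set a | y' a \isn't a Num.int] \subset F :\ a0.
  apply/subsetP => a; rewrite !inE => ha; apply/andP; split.
    by apply/eqP => e; rewrite e y'int in ha.
  apply/negP => yi; move: ha; rewrite y'0 ?yi //; apply: c0.
  by rewrite inE negbK.
apply: IH.
- have := subset_leq_card F'sub; move=> H1; apply: leq_trans H1 _.
  by move: HN; rewrite (cardsD1 a0 F) (cF a0 Pa0) add1n ltnS.
- exact: y'ge.
- move=> a; case: (eqVneq (c a) 0) => [e|ca]; first by rewrite y'0 //; apply: HS.
  move=> _; have := cF a ca; rewrite inE => /negP yn; apply: HS.
  by apply/eqP => e; apply: yn; rewrite e; exact: rpred0.
- by move=> x; rewrite /y' wtR_shift wc mulr0 addr0.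
Qed.
Lemma expz_sum (k : fieldType) (I : Type) (s : seq I) (P : pred I) (x : k)
  (f : I -> int) : x != 0 ->
  x ^ (\sum_(i <- s | P i) f i) = \prod_(i <- s | P i) x ^ (f i).
Proof.
move=> xnz; apply: (big_morph (fun n => x ^ n)) => [m n|]; first exact: expfzDr.
exact: expr0z.
Qed.

Lemma expz_sumT (k : fieldType) (I : finType) (x : k)
  (f : I -> int) : x != 0 -> x ^ (\sum_i f i) = \prod_i x ^ (f i).
Proof. exact: expz_sum. Qed.

Lemma prod_ind (k : fieldType) (Q0 : finType) (g : Q0 -> k) (z : Q0) (n : int) :
  \prod_x g x ^ ((z == x)%:R * n) = g z ^ n.
Proof.
rewrite (bigD1 z) //= eqxx mul1r big1 ?mulr1 // => x /negbTE.
by rewrite eq_sym => ->; rewrite mul0r expr0z.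
Qed.

Lemma rearrange (k : fieldType) (Q0 Q1 : finType) (hd tl : Q1 -> Q0)
  (g : Q0 -> k) (V : Q1 -> k) (m : Q1 -> nat) : torus_elt g ->
  \prod_a (rep_act hd tl (torus_inv g) V a) ^+ m a =
  char_eval (wtR hd tl (fun a => (m a)%:R : int)) g * \prod_a V a ^+ m a.
Proof.
move=> Hg; rewrite /char_eval /wtR /=.
rewrite [in RHS](eq_bigr (fun x => \prod_a g x ^ (((tl a == x)%:R - (hd a == x)%:R) * (m a)%:R))); last first.
  by move=> x _; rewrite expz_sumT.
rewrite exchange_big /= -big_split /=; apply: eq_bigr => a _.
rewrite (eq_bigr (fun x => g x ^ ((tl a == x)%:R * (m a)%:R) *
                           g x ^ ((hd a == x)%:R * (- (m a)%:R)))); last first.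
  by move=> x _; rewrite mulrBl -expfzDr ?Hg // mulrN.
rewrite big_split /= !prod_ind natz -exprnN -exprnP.
rewrite /rep_act /torus_inv invrK exprMn exprMn exprVn.
by rewrite mulrC mulrA [_ * (g (hd a) ^+ m a)^-1]mulrC.
Qed.

Lemma char_evalM (k : fieldType) (Q0 : finType) (s : Q0 -> int) (h g : Q0 -> k) :
  char_eval s (fun x => h x * g x) = char_eval s h * char_eval s g.
Proof. by rewrite /char_eval -big_split; apply: eq_bigr => x _; rewrite expfzMl. Qed.

Lemma char_eval1 (k : fieldType) (Q0 : finType) (s : Q0 -> int) :
  char_eval s (fun _ => (1 : k)) = 1.
Proof. by rewrite /char_eval big1 // => x _; rewrite exp1rz. Qed.

Lemma two_pow_nat (k : fieldType) (Hc : [pchar k] =i pred0) (n : nat) :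
  (2 : k) ^+ n = 1 -> n = 0%N.
Proof.
move=> H; have H1 : ((2 ^ n)%N%:R : k) = 1 by rewrite natrX H.
have H2 : (((2 ^ n) - 1)%N%:R : k) == 0 by rewrite natrB ?expn_gt0 // H1 subrr.
move: H2; rewrite (pcharf0P _).1 // subn_eq0.
case: n {H H1} => // n; rewrite expnS mul2n -addnn; have := expn_gt0 2 n.
by case: (2 ^ n)%N => // m _; rewrite addSn addnS.
Qed.

Lemma two_pow_inj (k : fieldType) (Hc : [pchar k] =i pred0) (a b : int) :
  (2 : k) ^ a = 2 ^ b -> a = b.
Proof.
have two0 : (2 : k) != 0 by rewrite ((pcharf0P _).1 Hc 2).
move=> H; have : (2 : k) ^ (b - a) = 1.
  by rewrite expfzDr // -H -expfzDr // subrr expr0z.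
case E : (b - a) => [n|n].
  move/(two_pow_nat Hc) => n0; apply/eqP; rewrite eq_sym -subr_eq0 E n0 //.
rewrite NegzE -exprnN => /(congr1 (@GRing.inv k)); rewrite invrK invr1.
by move/(two_pow_nat Hc).
Qed.

Lemma sep (k : fieldType) (Hc : [pchar k] =i pred0) (Q0 : finType)
  (u w : {ffun Q0 -> int}) : u != w ->
  exists h : Q0 -> k, torus_elt h /\ char_eval u h != char_eval w h.
Proof.
move=> uw.
have : ~~ [forall x, u x == w x].
  by apply: contra uw => /forallP H; apply/eqP/ffunP => x; apply/eqP/H.
case/forallPn => x Hx.
have two0 : (2 : k) != 0 by rewrite ((pcharf0P _).1 Hc 2).
exists (fun y => if y == x then 2 else 1); split.
  by move=> y; case: ifP => _ //; rewrite oner_neq0.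
have E (s : Q0 -> int) : char_eval s (fun y => if y == x then (2 : k) else 1) = 2 ^ (s x).
  rewrite /char_eval (bigD1 x) //= eqxx big1 ?mulr1 // => y /negbTE ->.
  by rewrite exp1rz.
by rewrite !E; apply: contra Hx => /eqP /(two_pow_inj Hc) ->.
Qed.

Lemma artin (k : fieldType) (Hc : [pchar k] =i pred0) (Q0 : finType)
  (w : {ffun Q0 -> int}) (U : seq {ffun Q0 -> int}) :
  forall l : seq (k * {ffun Q0 -> int}),
  (forall e, e \in l -> e.2 = w \/ e.2 \in U) ->
  (forall g, torus_elt g -> \sum_(e <- l) e.1 * char_eval e.2 g = 0) ->
  \sum_(e <- l | e.2 == w) e.1 = 0.
Proof.
elim: U => [|u U IH] l Hl Hs.
  transitivity (\sum_(e <- l) e.1 * char_eval e.2 (fun _ => (1 : k))); last first.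
    by apply: Hs => _; apply: oner_neq0.
  rewrite big_seq_cond [RHS]big_seq_cond; apply: eq_big => e.
    by case el: (e \in l) => //=; case: (Hl e el) => [->|//]; rewrite eqxx.
  by case/andP => _ _; rewrite char_eval1 mulr1.
case: (eqVneq u w) => [uw|uw].
  apply: IH => // e el; case: (Hl e el) => [->|]; first by left.
  by rewrite inE => /orP [/eqP ->|]; [left | right].
have [h [Hh Hne]] := sep Hc uw.
pose l' := map (fun e : k * {ffun Q0 -> int} =>
  ((e.1 * (char_eval e.2 h - char_eval u h), e.2) : k * {ffun Q0 -> int}))
  [seq e <- l | e.2 != u].
have := IH l'.
rewrite big_map big_filter_cond /=.
have -> : \sum_(i <- l | (i.2 != u) && (i.2 == w)) i.1 * (char_eval i.2 h - char_eval u h)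
       = (\sum_(i <- l | i.2 == w) i.1) * (char_eval w h - char_eval u h).
  rewrite mulr_suml; apply: eq_big => [e|e /andP[_ /eqP ->] //].
  by case: (eqVneq e.2 w) => [->|_]; rewrite ?andbF // andbT eq_sym uw.
move=> H; apply/eqP.
have : (\sum_(i <- l | i.2 == w) i.1) * (char_eval w h - char_eval u h) == 0.
  apply/eqP; apply: H.
  - move=> e /mapP [e0]; rewrite mem_filter => /andP[ne e0l] -> /=.
    case: (Hl e0 e0l) => [->|]; first by left.
    rewrite inE => /orP [/eqP E|]; last by right.
    by rewrite E eqxx in ne.
  - move=> g Hg; rewrite big_map big_filter /=.
    rewrite big_mkcond /=.
    transitivity (\sum_(e <- l) e.1 * char_eval e.2 (fun x => h x * g x)
                   - char_eval u h * \sum_(e <- l) e.1 * char_eval e.2 g); last first.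
      by rewrite Hs ?Hs // ?mulr0 ?subr0 // => x; rewrite mulf_neq0.
    rewrite mulr_sumr -sumrB; apply: eq_bigr => e _.
    case: (eqVneq e.2 u) => [->|_] /=.
      by rewrite char_evalM mulrCA subrr.
    rewrite char_evalM mulrBr mulrBl; congr (_ - _); first by rewrite mulrA.
    by rewrite mulrCA mulrA.
rewrite mulf_eq0 => /orP [//|]; rewrite subr_eq0 eq_sym => /eqP E.
by rewrite E eqxx in Hne.
Qed.

Lemma orbit_ext (k : fieldType) (Q0 Q1 : finType) (hd tl : Q1 -> Q0) (W : Q1 -> k)
  (s1 s2 : Q0 -> int) :
  (forall x, s1 x = s2 x) -> orbit_semigroup hd tl W s1 -> orbit_semigroup hd tl W s2.
Proof.
move=> E [f [[Hp Hi] fW]]; exists f; split => //; split => // g Hg V.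
by rewrite Hi //; congr (_ * _); apply: eq_bigr => x _; rewrite E.
Qed.

Lemma partB (k : fieldType) (Q0 Q1 : finType) (hd tl : Q1 -> Q0) (W : Q1 -> k)
  (m : Q1 -> nat) :
  (forall a, m a != 0%N -> W a != 0) ->
  orbit_semigroup hd tl W (wtR hd tl (fun a => (m a)%:R : int)).
Proof.
move=> Hm; exists (fun V => \prod_a V a ^+ m a); split; first split.
- exists [:: (1, [ffun a => m a])] => V; rewrite big_seq1 /= mul1r.
  by apply: eq_bigr => a _; rewrite ffunE.
- by move=> g Hg V; apply: rearrange.
apply/prodf_neq0 => a _; case: (eqVneq (m a) 0%N) => [->|/Hm].
  by rewrite expr0 oner_neq0.
exact: expf_neq0.
Qed.

Lemma partA (k : fieldType) (Hc : [pchar k] =i pred0) (Q0 Q1 : finType)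
  (hd tl : Q1 -> Q0) (W : Q1 -> k) (sigma : Q0 -> int) :
  orbit_semigroup hd tl W sigma ->
  exists m : Q1 -> nat, (forall a, m a != 0%N -> W a != 0) /\
    forall x, wtR hd tl (fun a => (m a)%:R : int) x = sigma x.
Proof.
case=> f [[[s Hs] Hinv] fW].
pose wt_of (m : {ffun Q1 -> nat}) : {ffun Q0 -> int} :=
  [ffun x => wtR hd tl (fun a => (m a)%:R : int) x].
pose w : {ffun Q0 -> int} := [ffun x => sigma x].
pose T (e : k * {ffun Q1 -> nat}) := e.1 * \prod_a W a ^+ e.2 a.
pose l := [seq ((T e, wt_of e.2) : k * {ffun Q0 -> int}) | e <- s] ++
          [seq ((- T e, w) : k * {ffun Q0 -> int}) | e <- s].
have := @artin k Hc Q0 w [seq wt_of e.2 | e <- s] l.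
rewrite big_cat /= !big_map /= eqxx sumrN.
have fWs : f W = \sum_(j <- s) T j by rewrite Hs.
move=> Hart.
have Hl : forall e, e \in l -> e.2 = w \/ e.2 \in [seq wt_of e0.2 | e0 <- s].
  move=> e; rewrite mem_cat => /orP [] /mapP [j js ->] /=; last by left.
  by right; apply/mapP; exists j.
have Hs0 : forall g : Q0 -> k, torus_elt g -> \sum_(e <- l) e.1 * char_eval e.2 g = 0.
  move=> g Hg; rewrite big_cat /= !big_map /=.
  have := Hinv g Hg W; rewrite !Hs => E.
  transitivity (\sum_(j <- s) j.1 * \prod_a (rep_act hd tl (torus_inv g) W a) ^+ j.2 a
                - char_eval sigma g * \sum_(j <- s) j.1 * \prod_a W a ^+ j.2 a); last first.
    by rewrite E subrr.
  rewrite mulr_sumr -sumrN; congr (_ + _).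
    apply: eq_bigr => j _.
    rewrite rearrange // /T -mulrA [_ * char_eval _ _]mulrC; congr (_ * (_ * _)).
    by rewrite /char_eval; apply: eq_bigr => x _; rewrite ffunE.
  apply: eq_bigr => j _; rewrite /T mulNr mulrC; congr (- (_ * _)).
  by rewrite /char_eval; apply: eq_bigr => x _; rewrite ffunE.
move: (Hart Hl Hs0) => /eqP; rewrite subr_eq0 -fWs => /eqP Hsum.
have [j js /andP[jw Tj]] : exists2 j, j \in s & (wt_of j.2 == w) && (T j != 0).
  apply/hasP; apply: contraR fW => /hasPn Hn; rewrite -Hsum big_seq_cond big1 //=.
  move=> j /andP[js jw]; move: (Hn j js); rewrite jw /= negbK => /eqP //.
have HP : \prod_a W a ^+ j.2 a != 0 by apply: contraNneq Tj => P0; rewrite /T P0 mulr0.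
exists j.2; split.
  move=> a ha; move/prodf_neq0: HP => /(_ a isT).
  by apply: contraNneq => ->; rewrite expr0n (negbTE ha).
by move=> x; move/eqP/ffunP: jw => /(_ x); rewrite !ffunE.
Qed.

Unset Implicit Arguments.

Theorem proposition6p3 (k : closedFieldType) (Hchar : [pchar k] =i pred0)
    (Q0 Q1 : finType) (hd tl : Q1 -> Q0)
    (Hacyc : no_oriented_cycles hd tl) (W : Q1 -> k) :
  saturated (orbit_semigroup hd tl W).
Proof.
move=> sigma n n1 Hn.
have [m [Hm Hw]] := partA Hchar Hn.
pose y a : rat := (m a)%:R / n%:R.
have n0 : (n%:R : rat) != 0 by rewrite pnatr_eq0 -lt0n.
have Hy0 : forall a, 0 <= y a by move=> a; rewrite divr_ge0 ?ler0n.
have HyS : forall a, y a != 0 -> W a != 0.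
  move=> a; rewrite /y mulf_eq0 negb_or => /andP[ma _]; apply: Hm.
  by move: ma; rewrite pnatr_eq0.
have Hyw : forall x, wtR hd tl y x = (sigma x)%:~R.
  move=> x.
  have E1 : wtR hd tl y x = (wtR hd tl (fun a => (m a)%:R : int) x)%:~R / n%:R.
    rewrite /wtR rmorph_sum mulr_suml; apply: eq_bigr => a _.
    by rewrite rmorphM rmorphB /= !rmorph_nat mulrA.
  by rewrite E1 Hw intrM -pmulrn mulrAC mulfV // mul1r.
have [m' [Hm' Hw']] := @round_flow _ _ hd tl (fun a => W a != 0) sigma _ y
  (leqnn _) Hy0 HyS Hyw.
apply: (orbit_ext Hw'). apply: partB. exact: Hm'.
Qed.
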